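(* Let $g\sim\mathcal N(0,1)$ and, for nonnegative integers $a,b$, let $I(a,b)=\mathbb E[(g^2-1)^ag^{2b}]$. Then: (i) $I(0,0)=1$, $I(1,0)=0$ and $I(0,b)=(2b-1)!!$. Moreover $I(a,0)=2(a-1)\bigl(I(a-1,0)+I(a-2,0)\bigr)$ for $a\ge2$, and $I(a,b)=2a\,I(a-1,b)+(2b-1)\,I(a,b-1)$ for $a\ge1$, $b\ge1$. (ii) If either $b=0$ and $a\ge2$, or $b\ge1$ and $a\ge0$, then $\mathbb E[g^{2a+2b}]\le2^a\,\mathbb E[(g^2-1)^ag^{2b}]$. *)

(* Defs.v *)
From HB Require Import structures.
From mathcomp Require Import all_boot all_order all_algebra.
From mathcomp Require Import all_classical all_reals all_analysis.
Set Implicit Arguments. Unset Strict Implicit. Unset Printing Implicit Defensive.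
Import Order.TTheory GRing.Theory Num.Theory.
Local Open Scope ring_scope.
Local Open Scope ereal_scope.

Fixpoint dfact (n : nat) : nat :=
  match n with
  | 0 | 1 => 1
  | (m.+2) as k => (k * dfact m)%N
  end.

Definition gauss_E {R : realType} (f : R -> R) : \bar R :=
  \int[normal_prob (0:R) 1]_x (f x)%:E.

Definition Iab {R : realType} (a b : nat) : \bar R :=
  gauss_E (fun x : R => ((x ^+ 2 - 1) ^+ a * x ^+ (2 * b))%R).

(* Main.v *)
Require Import Defs.
From HB Require Import structures.
From mathcomp Require Import all_boot all_order all_algebra.
From mathcomp Require Import all_classical all_reals all_analysis.
From mathcomp Require Import measurable_realfun.
From mathcomp Require Import ring lra.
From Stdlib Require Import Lia.
From mathcomp Require Import zify.
Set Implicit Arguments. Unset Strict Implicit. Unset Printing Implicit Defensive.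
Import Order.TTheory GRing.Theory Num.Theory.
Import numFieldTopology.Exports.
Local Open Scope classical_set_scope.
Local Open Scope ring_scope.
Section S.
Context {R : realType}.
Local Notation mu := (@lebesgue_measure R).
Local Notation pdf := (@normal_pdf R 0 1).

Lemma pdfE x : pdf x = normal_peak 1 * expR (- x ^+ 2 / 2).
Proof. by rewrite /normal_pdf oner_eq0 /normal_fun subr0 expr1n. Qed.

Lemma pdf_cont : continuous pdf.
Proof. exact: continuous_normal_pdf. Qed.

Lemma is_derive_pdf (x : R) : is_derive x (1:R) pdf (- x * pdf x).
Proof.
have -> : pdf = (fun x => normal_peak 1 * expR (- x ^+ 2 / 2)).
  by apply/funext => y; rewrite pdfE.
have h1 : is_derive x (1:R) (fun y : R => - y ^+ 2 / 2) (- x).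
  apply: is_derive_eq.
  rewrite !scaler0 add0r.
  change (2^-1 * - (x * 1 + x * 1) = - x).
  rewrite mulr1 -mulr2n mulrN; congr (- _).
  lra.
have h2 := @is_derive1_comp R expR (fun y : R => - y ^+ 2 / 2) x _ _ (is_derive_expR _) h1.
have h3 := is_deriveZ (normal_peak 1) h2.
have -> : (fun x0 : R => normal_peak 1 * expR (- x0 ^+ 2 / 2)) =
   normal_peak 1 *: (expR \o (fun y : R => - y ^+ 2 / 2)) by apply/funext.
apply: is_derive_eq h3 _.
change (normal_peak 1 * (expR (- x ^+ 2 / 2) * - x) = - x * (normal_peak 1 * expR (- x ^+ 2 / 2))).
rewrite mulrC mulrA; ring.
Qed.


Lemma dLR (F : R -> R) a b : (forall x, derivable F x 1) ->
  derivable_oo_LRcontinuous F a b.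
Proof.
move=> dF; have cF : continuous F.
  by move=> x; apply/differentiable_continuous/derivable1_diffP.
split; first by move=> x _.
- exact/cvg_at_right_filter/cF.
- exact/cvg_at_left_filter/cF.
Qed.

Lemma cont_hk n : continuous (fun x : R => x ^+ n * pdf x).
Proof.
move=> x; apply: cvgM; last exact: pdf_cont.
exact: exprn_continuous.
Qed.

Lemma integrable_hk n (b : R) : mu.-integrable `[0, b] (EFin \o (fun x : R => x ^+ n * pdf x)).
Proof.
apply: continuous_compact_integrable; first exact: segment_compact.
by apply: continuous_subspaceT; exact: cont_hk.
Qed.

Lemma ibp k (b : R) : 0 < b ->
  \int[mu]_(x in `[0, b]) (x ^+ (2*k).+2 * pdf x) =
  (2*k).+1%:R * \int[mu]_(x in `[0, b]) (x ^+ (2*k) * pdf x)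
   - b ^+ (2*k).+1 * pdf b.
Proof.
move=> b0.
have dG x : is_derive x (1:R) (fun y : R => - pdf y) (x * pdf x).
  apply: is_derive_eq; first exact: (is_deriveN (is_derive_pdf x)).
  by rewrite mulNr opprK.
have c1 : {within `[0, b], continuous (fun y : R => (2*k).+1%:R * y ^+ (2*k))}.
  apply: continuous_subspaceT => x; apply: cvgM; first exact: cvg_cst.
  exact: exprn_continuous.
have c2 : derivable_oo_LRcontinuous (fun y : R => y ^+ (2*k).+1) 0 b.
  by apply: dLR => x; exact: exprn_derivable.
have c3 : {in `]0, b[, (fun y : R => y ^+ (2*k).+1)^`()%classic =1 (fun y => (2*k).+1%:R * y ^+ (2*k))}.
  by move=> x _; rewrite exp_derive1.
have c4 : {within `[0, b], continuous (fun y : R => y * pdf y)}.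
  apply: continuous_subspaceT => x; apply: cvgM; first exact: cvg_id.
  exact: pdf_cont.
have c5 : derivable_oo_LRcontinuous (fun y : R => - pdf y) 0 b.
  by apply: dLR => x; case: (dG x).
have c6 : {in `]0, b[, (fun y : R => - pdf y)^`()%classic =1 (fun y => y * pdf y)}.
  by move=> x _; rewrite derive1E derive_val.
have E := Rintegration_by_parts b0 c1 c2 c3 c4 c5 c6.
have -> : \int[mu]_(x in `[0, b]) (x ^+ (2 * k).+2 * pdf x) =
   \int[mu]_(x in `[0, b]) (x ^+ (2 * k).+1 * (x * pdf x)).
  by apply: eq_Rintegral => x _; rewrite mulrA -exprSr.
rewrite E expr0n/= mul0r subr0.
have -> : \int[mu]_(x in `[0, b]) ((2 * k).+1%:R * x ^+ (2 * k) * - pdf x) =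
   \int[mu]_(x in `[0, b]) (- (2 * k).+1%:R * (x ^+ (2 * k) * pdf x)).
  by apply: eq_Rintegral => x _; rewrite mulrN mulNr mulrA.
rewrite RintegralZl//; last exact: integrable_hk.
lra.
Qed.

Lemma boundary_bound k (b : R) : 0 < b ->
  b ^+ (2*k).+1 * pdf b <= (normal_peak 1 * (k.+1)`!%:R * 2 ^+ k.+1) / b.
Proof.
move=> b0; rewrite pdfE.
set X := b ^+ 2 / 2.
have X0 : 0 < X by apply: divr_gt0 => //; exact: exprn_gt0.
have EL : X ^+ k.+1 / (k.+1)`!%:R <= expR X.
  by have := expR_ge1Dxn k (ltW X0); lra.
have -> : expR (- b ^+ 2 / 2) = (expR X)^-1 by rewrite mulNr expRN.
have F0 : 0 < (k.+1)`!%:R :> R by rewrite ltr0n fact_gt0.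
have L0 : 0 < X ^+ k.+1 / (k.+1)`!%:R by apply: divr_gt0 => //; exact: exprn_gt0.
have c0 : 0 <= normal_peak (1:R) by exact: normal_peak_ge0.
apply: (@le_trans _ _ (b ^+ (2*k).+1 * (normal_peak 1 * (X ^+ k.+1 / (k.+1)`!%:R)^-1))).
  apply: ler_wpM2l; first by apply: exprn_ge0; exact: ltW.
  apply: ler_wpM2l => //.
  by rewrite lef_pV2 ?posrE// (lt_le_trans L0 EL).
have -> : X ^+ k.+1 = b ^+ (2*k).+1 * b / 2 ^+ k.+1.
  by rewrite /X exprMn exprVn -exprM -exprSr mulnSr addn2.
have P0 : b ^+ (2*k).+1 != 0 by rewrite expf_neq0 // gt_eqF.
have T0 : (2:R) ^+ k.+1 != 0 by rewrite expf_neq0.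
rewrite le_eqVlt; apply/orP; left; apply/eqP.
field.
by rewrite P0 T0 gt_eqF // gt_eqF.
Qed.

Lemma boundary_cvg k :
  (fun n : nat => n.+1%:R ^+ (2*k).+1 * pdf n.+1%:R) @ \oo --> (0:R).
Proof.
pose C : R := normal_peak 1 * (k.+1)`!%:R * 2 ^+ k.+1.
apply: (@squeeze_cvgr _ _ _ _ (fun=> 0) (fun n => C * harmonic n)).
- apply: nearW => n; apply/andP; split.
    apply: mulr_ge0; first exact: exprn_ge0.
    exact: normal_pdf_ge0.
  by have := boundary_bound k (ltr0Sn R n); rewrite /harmonic/=.
- exact: cvg_cst.
- have -> : (0:R) = C * 0 by rewrite mulr0.
  apply: cvgM; first exact: cvg_cst.
  exact: cvg_harmonic.
Qed.
End S.
Section M.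
Context {R : realType}.
Local Notation mu := (@lebesgue_measure R).
Local Notation pdf := (@normal_pdf R 0 1).

Definition mom (k : nat) : R := (dfact (2*k).-1)%:R.

Lemma hk_ge0 k (x : R) : 0 <= x ^+ (2*k) * pdf x.
Proof.
apply: mulr_ge0; last exact: normal_pdf_ge0.
by apply: exprn_even_ge0; rewrite oddM.
Qed.

Lemma pdfN (x : R) : pdf (- x) = pdf x.
Proof. by rewrite !pdfE sqrrN. Qed.

Lemma half_eq (y : \bar R) (z : R) : (2%:E * y = z%:E)%E -> y = (z / 2)%:E.
Proof.
case: y => [r| |] /=.
- move=> /eqP; rewrite -EFinM eqe => /eqP <-.
  by congr EFin; rewrite mulrC mulKf // pnatr_eq0.
- by rewrite mulry gtr0_sg // mul1e.
- by rewrite mulrNy gtr0_sg // mul1e.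
Qed.

Lemma full_half k : (\int[mu]_x ((x ^+ (2*k) * pdf x)%:E) =
  2%:E * \int[mu]_(x in `[0%R, +oo[) ((x ^+ (2*k) * pdf x)%:E))%E.
Proof.
rewrite ge0_symfun_integralT.
- by rewrite set_itvcy.
- exact: hk_ge0.
- exact: cont_hk.
- move=> x /=; rewrite pdfN; congr (_ * _).
  by rewrite !exprM sqrrN.
Qed.

Lemma A0 : (\int[mu]_(x in `[0%R, +oo[) ((x ^+ (2*0) * pdf x)%:E))%E = (1 / 2)%:E.
Proof.
apply: half_eq; rewrite -full_half.
under eq_integral do rewrite muln0 expr0 mul1r.
exact: integral_normal_pdf.
Qed.

Definition Ak k := (\int[mu]_(x in `[0%R, +oo[) ((x ^+ (2*k) * pdf x)%:E))%E.

Lemma Rint_E n (b : R) : (\int[mu]_(x in `[0%R, b]) ((x ^+ n * pdf x)%:E))%E =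
  (\int[mu]_(x in `[0, b]) (x ^+ n * pdf x))%:E.
Proof. by rewrite /Rintegral fineK //; exact: integrable_fin_num (integrable_hk n b). Qed.

Lemma cvA k : (fun n : nat => (\int[mu]_(x in `[0, n.+1%:R]) (x ^+ (2*k) * pdf x))%:E)
   @ \oo --> Ak k.
Proof.
have mh : measurable_fun setT (fun x : R => x ^+ (2*k) * pdf x).
  by apply: continuous_measurable_fun; exact: cont_hk.
have := @ge0_cvgn_integral R mu _ (hk_ge0 k) mh.
rewrite -cvg_shiftS /=.
by under eq_fun do rewrite Rint_E.
Qed.

Lemma Astep k a : Ak k = a%:E -> Ak k.+1 = ((2*k).+1%:R * a)%:E.
Proof.
move=> Ha.
have r_cv : (fun n : nat => \int[mu]_(x in `[0, n.+1%:R]) (x ^+ (2*k) * pdf x)) @ \oo --> a.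
  have := cvA (k:=k); rewrite Ha => /fine_cvg.
  by [].
have s_cv : (fun n : nat => \int[mu]_(x in `[0, n.+1%:R]) (x ^+ (2*k.+1) * pdf x)) @ \oo
    --> (2*k).+1%:R * a.
  rewrite mulnS add2n.
  under eq_fun do rewrite ibp //.
  rewrite -[(2*k).+1%:R * a]subr0.
  apply: cvgB; last exact: boundary_cvg.
  by apply: cvgM => //; exact: cvg_cst.
have H2 : (fun n : nat => (\int[mu]_(x in `[0, n.+1%:R]) (x ^+ (2*k.+1) * pdf x))%:E)
   @ \oo --> ((2*k).+1%:R * a)%:E.
  by apply: cvg_EFin => //; exact: nearW.
exact: (cvg_unique _ (cvA (k:=k.+1)) H2).
Qed.
End M.

Section N.
Context {R : realType}.
Local Notation mu := (@lebesgue_measure R).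
Local Notation pdf := (@normal_pdf R 0 1).

Lemma dfactS k : dfact (2*k.+1).-1 = ((2*k).+1 * dfact (2*k).-1)%N.
Proof.
case: k => [//|k].
by rewrite !mulnS /= -!mulnS.
Qed.

Lemma Ak_val k : @Ak R k = (@mom R k / 2)%:E.
Proof.
elim: k => [|k IH]; first by rewrite /Ak A0 /mom.
rewrite (Astep IH) /mom dfactS natrM; congr EFin.
by rewrite mulrA.
Qed.
Lemma normal_change (f : R -> R) : (forall x, (0 <= f x)%R) -> measurable_fun setT f ->
 (\int[normal_prob (0:R) 1]_x (f x)%:E = \int[mu]_x (f x * normal_pdf 0 1 x)%:E)%E.
Proof.
move=> f0 mf.
have numu := @normal_prob_dominates R 0 1.
rewrite -(Radon_Nikodym_SigmaFinite.change_of_variables numu) //; last first.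
  exact/measurable_EFinP.
under [RHS]eq_integral do rewrite EFinM.
apply: ae_eq_integral => //.
- apply: emeasurable_funM; first exact/measurable_EFinP.
  exact: measurable_int (Radon_Nikodym_SigmaFinite.f_integrable numu).
- apply: emeasurable_funM; first exact/measurable_EFinP.
  by apply/measurable_EFinP; apply: measurable_normal_pdf.
- have H : ae_eq mu setT (Radon_Nikodym_SigmaFinite.f (normal_prob (0:R) 1) mu)
      (fun x => (normal_pdf 0 1 x)%:E).
    apply: integral_ae_eq => //.
    + exact: Radon_Nikodym_SigmaFinite.f_integrable.
    + by apply/measurable_EFinP; apply: measurable_normal_pdf.
    + move=> E _ mE; rewrite -Radon_Nikodym_SigmaFinite.f_integral//.
  by move: H; apply: filterS => x /= /[apply] ->.
Qed.

Local Notation P := (normal_prob (0:R) 1).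

Lemma even_ge0 k (x : R) : 0 <= x ^+ (2*k).
Proof. by apply: exprn_even_ge0; rewrite oddM. Qed.

Lemma E_mom k : (\int[P]_x ((x ^+ (2*k))%:E))%E = (@mom R k)%:E.
Proof.
rewrite normal_change; last 2 first.
- exact: even_ge0.
- by apply: continuous_measurable_fun; exact: exprn_continuous.
rewrite full_half -/(Ak k) Ak_val -EFinM; congr EFin.
by rewrite mulrC divfK // pnatr_eq0.
Qed.

Lemma int_mom k : P.-integrable setT (fun x : R => (x ^+ (2*k))%:E).
Proof.
apply/integrableP; split.
  by apply/measurable_EFinP; apply: continuous_measurable_fun; exact: exprn_continuous.
under eq_integral do rewrite gee0_abs ?lee_fin ?even_ge0 //.
by rewrite E_mom ltry.
Qed.
End N.

Section A.
Context {R : realType}.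

Fixpoint Ir (a b : nat) : R := if a is a'.+1 then Ir a' b.+1 - Ir a' b else mom b.

Lemma momS b : @mom R b.+1 = (2 * b%:R + 1) * mom b.
Proof. by rewrite /mom dfactS natrM -addn1 natrD natrM. Qed.

Lemma mom_ge0 b : 0 <= @mom R b.
Proof. exact: ler0n. Qed.

Lemma recP a b : Ir a b.+1 = 2 * a%:R * Ir a.-1 b.+1 + (2 * b%:R + 1) * Ir a b.
Proof.
elim: a b => [|a IH] b.
  by rewrite /= momS mulr0 mul0r add0r.
have h1 := IH b.+1; have h2 := IH b.
rewrite /=.
case: a IH h1 h2 => [|a] IH h1 h2.
  rewrite /= in h1 h2 *.
  rewrite -natr1 in h1 *.
  lra.
simpl in h1, h2 |- *.
lra.
Qed.

Lemma recS a b : Ir a.+1 b.+1 = 2 * a.+1%:R * Ir a b.+1 + (2 * b%:R + 1) * Ir a.+1 b.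
Proof. exact: recP. Qed.

Lemma rec0 a : Ir a.+2 0 = 2 * a.+1%:R * Ir a 1.
Proof.
have e : Ir a.+2 0 = Ir a.+1 1 - Ir a.+1 0 by [].
rewrite e (recS a 0).
rewrite mulr0 add0r mul1r; lra.
Qed.

Lemma Ir10 : Ir 1 0 = 0.
Proof. by rewrite /= momS mulr0 add0r mul1r subrr. Qed.

Definition cnd (a b : nat) := ((b == 0%N) && (2 <= a)%N) || (1 <= b)%N.

Lemma mainii n a b : (a + b <= n)%N -> cnd a b -> mom (a + b)%N <= 2 ^+ a * Ir a b.
Proof.
elim: n a b => [|n IH] a b.
  by rewrite leqn0 addn_eq0 => /andP[/eqP -> /eqP ->].
move=> abn; case: a abn => [|a] abn cab.
  by rewrite expr0 mul1r add0n.
case: b abn cab => [|b] abn cab.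
  case: a abn cab => [|a] abn cab; first by rewrite /cnd in cab.
  rewrite rec0 addn0.
  have H := IH a 1%N.
  have : mom (a + 1)%N <= 2 ^+ a * Ir a 1 by apply: H => //; rewrite /cnd; lia.
  rewrite addn1 => Ha.
  rewrite momS.
  have m0 := mom_ge0 a.+1.
  have -> : (2:R) ^+ a.+2 * (2 * a.+1%:R * Ir a 1) = 8 * a.+1%:R * (2 ^+ a * Ir a 1).
    by rewrite !exprS; ring.
  rewrite -natr1.
  have a0 : 0 <= a%:R :> R by exact: ler0n.
  nra.
rewrite recS.
have H1 : mom (a + b.+1)%N <= 2 ^+ a * Ir a b.+1 by apply: IH => //; lia.
have H2 : 0 <= 2 ^+ a.+1 * Ir a.+1 b /\ mom (a.+1 + b)%N <= 2 ^+ a.+1 * Ir a.+1 b \/ (a = 0%N /\ b = 0%N).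
  case: (boolP (cnd a.+1 b)) => c.
    left; have h := IH a.+1 b ltac:(lia) c; split => //.
    exact: le_trans (mom_ge0 _) h.
  by right; move: c; rewrite /cnd; lia.
have -> : (a.+1 + b.+1 = (a.+1 + b).+1)%N by rewrite addnS.
rewrite momS.
have -> : (2:R) ^+ a.+1 * (2 * a.+1%:R * Ir a b.+1 + (2 * b%:R + 1) * Ir a.+1 b) =
   4 * a.+1%:R * (2 ^+ a * Ir a b.+1) + (2 * b%:R + 1) * (2 ^+ a.+1 * Ir a.+1 b).
  by rewrite exprS; ring.
move: H1; rewrite -addSnnS => H1.
have m0 := mom_ge0 (a.+1 + b).
have b0 : 0 <= b%:R :> R by exact: ler0n.
have a0 : 0 <= a%:R :> R by exact: ler0n.
case: H2 => [[H2a H2b]|[a0' b0']].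
  rewrite (natrD _ a.+1 b) -natr1.
  rewrite -natr1 in H1 *.
  nra.
subst; rewrite Ir10 /= !momS /mom /=.
lra.
Qed.
End A.

Section B.
Context {R : realType}.
Local Notation P := (normal_prob (0:R) 1).

Lemma Iab_int a : forall b, P.-integrable setT (fun x : R => ((x ^+ 2 - 1) ^+ a * x ^+ (2 * b))%:E)
  /\ @Iab R a b = (Ir a b)%:E.
Proof.
elim: a => [|a IH] b.
  have e (x : R) : (x ^+ 2 - 1) ^+ 0 * x ^+ (2 * b) = x ^+ (2 * b) by rewrite expr0 mul1r.
  split.
    apply: eq_integrable (int_mom b); first exact: measurableT.
    by move=> x _; rewrite e.
  by rewrite /Iab /gauss_E; under eq_integral do rewrite e; exact: E_mom.
have [i1 e1] := IH b.+1; have [i2 e2] := IH b.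
have e (x : R) : (x ^+ 2 - 1) ^+ a.+1 * x ^+ (2 * b) =
   (x ^+ 2 - 1) ^+ a * x ^+ (2 * b.+1) - (x ^+ 2 - 1) ^+ a * x ^+ (2 * b).
  by rewrite exprS mulnS exprD; ring.
split.
  apply: eq_integrable (integrableB _ i1 i2); first exact: measurableT.
  by move=> x _ /=; rewrite e EFinB.
  exact: measurableT.
move: e1 e2; rewrite /Iab /gauss_E => e1 e2.
under eq_integral do rewrite e EFinB.
by rewrite integralB_EFin // e1 e2 /= EFinB.
Qed.
End B.

Unset Implicit Arguments.
Local Open Scope ereal_scope.
Theorem lemmaC1 (R : realType) :
  (* (i) *)
  (@Iab R 0 0 = 1 /\
   @Iab R 1 0 = 0 /\
   (forall b : nat, @Iab R 0 b = ((dfact (2 * b).-1)%:R)%:E) /\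
   (forall a : nat, (2 <= a)%N ->
      @Iab R a 0 = ((2 * (a - 1))%:R)%:E * (@Iab R (a - 1) 0 + @Iab R (a - 2) 0)) /\
   (forall a b : nat, (1 <= a)%N -> (1 <= b)%N ->
      @Iab R a b = ((2 * a)%:R)%:E * @Iab R (a - 1) b
                   + (((2 * b).-1)%:R)%:E * @Iab R a (b - 1))) /\
  (* (ii) *)
  (forall a b : nat, ((b == 0%N) && (2 <= a)%N) || (1 <= b)%N ->
     gauss_E (fun x : R => (x ^+ (2 * a + 2 * b))%R) <= ((2 ^ a)%:R)%:E * @Iab R a b).
Proof.
have IE a b := (Iab_int (R:=R) a b).2.
split.
  split; first by rewrite IE /= /mom.
  split; first by rewrite IE Ir10.
  split; first by move=> b; rewrite IE.
  split.
    move=> a a2; rewrite !IE.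
    case: a a2 => [|[|a]] // _.
    have -> : (a.+2 - 1 = a.+1)%N by lia.
    have -> : (a.+2 - 2 = a)%N by lia.
    rewrite -EFinD -EFinM; congr EFin.
    have e : Ir a.+1 0 = (Ir a 1 - Ir a 0)%R :> R by [].
    rewrite rec0 e natrM; ring.
  move=> a b a1 b1; rewrite !IE.
  case: a a1 => [//|a] _; case: b b1 => [//|b] _.
  have -> : (a.+1 - 1 = a)%N by lia.
  have -> : (b.+1 - 1 = b)%N by lia.
  have -> : ((2 * b.+1).-1 = (2 * b).+1)%N by lia.
  rewrite -!EFinM -EFinD; congr EFin.
  rewrite recS -natr1 !natrM; ring.
move=> a b c.
rewrite /gauss_E /= IE -mulnDr E_mom -EFinM lee_fin natrX.
exact: (mainii (n := (a + b)%N)).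
Qed.
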